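(* Let $\mathbb{K}$ be an algebraically closed field of characteristic zero, $Y$ an irreducible affine variety and $X=Y\times\mathbb{A}^1$. Let $V\subseteq Y$ be a nonempty closed rigid subset such that $V\times\mathbb{A}^1\subseteq X$ is $\mathrm{SAut}(X)$-invariant. Then $Y$ is of type B or C, i.e. $\mathrm{HD}^*(X)\neq\mathbb{K}[X]$.
   Context: A derivation is locally nilpotent (LND) if every element is killed by some power of it; a closed subset $V$ is rigid if its coordinate ring $\mathbb{K}[V]$ admits no nonzero LND. Each LND $\partial$ of $\mathbb{K}[X]$ defines a $\mathbb{G}_a$-subgroup $\{\exp(s\partial)\}$ of $\mathrm{Aut}(X)$; $\mathrm{SAut}(X)$ is the subgroup generated by all of them. A slice of an LND $\partial$ is $s$ with $\partial(s)=1$; $\mathrm{HD}^*(X)$ is the subalgebra of $\mathbb{K}[X]$ generated by kernels of all LNDs of $\mathbb{K}[X]$ having a slice. $Y$ is of type A if $\mathrm{HD}^*(X)=\mathbb{K}[X]$, type B if $\mathrm{HD}^*(X)$ is not finitely generated, type C if $Y$ is rigid and $\mathrm{HD}^*(X)=\mathbb{K}[Y]$; every $Y$ has exactly one type. *)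

(* Defs.v *)
From HB Require Import structures.
From mathcomp Require Import all_boot all_order all_algebra all_field.
Set Implicit Arguments. Unset Strict Implicit. Unset Printing Implicit Defensive.
Import Order.TTheory GRing.Theory Num.Theory.
Local Open Scope ring_scope.

Section Defs.
Variables (K : fieldType) (B : comRingType) (iota : K -> B).

Definition is_Kder (D : B -> B) : Prop :=
  [/\ forall f g, D (f + g) = D f + D g,
      forall f g, D (f * g) = f * D g + g * D f
    & forall c, D (iota c) = 0].

Definition is_LND (D : B -> B) : Prop :=
  is_Kder D /\ forall f, exists n, iter n D f = 0.

Definition has_slice (D : B -> B) : Prop := exists s, D s = 1.

Inductive gen_subalg (S : B -> Prop) : B -> Prop :=
  | gs_const c : gen_subalg S (iota c)
  | gs_gen f : S f -> gen_subalg S f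
  | gs_add f g : gen_subalg S f -> gen_subalg S g -> gen_subalg S (f + g)
  | gs_mul f g : gen_subalg S f -> gen_subalg S g -> gen_subalg S (f * g).

Definition fin_gen_alg : Prop :=
  exists s : seq B, forall f, gen_subalg (fun g => g \in s) f.

Definition HDstar (f : B) : Prop :=
  gen_subalg (fun g => exists D, [/\ is_LND D, has_slice D & D g = 0]) f.

(** exp(sD) f, computed as a finite sum up to any n with D^n f = 0. *)
Definition exp_sum (D : B -> B) (s : K) (f : B) (n : nat) : B :=
  \sum_(i < n) iota (s ^+ i / (i`!)%:R) * iter i D f.

(** The ideal J (of a closed subset) is SAut-invariant: stable under every
    automorphism exp(sD), D an LND, s in K (these generate SAut). *)
Definition SAut_invariant (J : B -> Prop) : Prop :=
  forall D, is_LND D -> forall (s : K) f, J f ->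
    forall n, iter n D f = 0 -> J (exp_sum D s f n).

Definition radical_ideal (I : B -> Prop) : Prop :=
  [/\ I 0, (forall a b, I a -> I b -> I (a + b)),
      (forall a b, I b -> I (a * b))
    & forall a n, I (a ^+ n) -> I a].

(** A map D : B -> B representing (as a lift) a locally nilpotent
    K-derivation of the quotient B / I. *)
Definition is_LND_mod (I : B -> Prop) (D : B -> B) : Prop :=
  [/\ forall a, I a -> I (D a),
      forall a b, I (D (a + b) - (D a + D b)),
      forall a b, I (D (a * b) - (a * D b + b * D a)),
      forall c, I (D (iota c))
    & forall a, exists n, I (iter n D a)].

(** The closed subset with (radical) ideal I is rigid: B/I has no nonzero LND. *)
Definition rigid_quot (I : B -> Prop) : Prop :=
  ~ exists D, is_LND_mod I D /\ exists a, ~ I (D a).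

End Defs.

Definition polyC_emb (K : fieldType) (A : comRingType) (iota : K -> A)
  : K -> {poly A} := fun c => (iota c)%:P.

(** ideal of V x A^1 in K[Y][t], where I is the ideal of V in K[Y] *)
Definition coef_ideal (A : comRingType) (I : A -> Prop) : {poly A} -> Prop :=
  fun p => forall i, I p`_i.

(* Main.v *)
Require Import Defs.
From HB Require Import structures.
From mathcomp Require Import all_boot all_order all_algebra all_field.
Import GRing.Theory.
Local Open Scope ring_scope.
From mathcomp Require Import zify ring boolp.
From Stdlib Require Import Classical.

Section LND.
Variables (K : fieldType) (B : comNzRingType) (sc : {rmorphism K -> B}).
Variable F : B -> B.
Hypothesis FD : forall f g, F (f + g) = F f + F g.
Hypothesis FM : forall f g, F (f * g) = f * F g + g * F f.
Hypothesis FC : forall k, F (sc k) = 0.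

Lemma F0 : F 0 = 0.
Proof. by apply: (addrI (F 0)); rewrite -FD !addr0. Qed.

Lemma Fsum I r P (g : I -> B) :
  F (\sum_(i <- r | P i) g i) = \sum_(i <- r | P i) F (g i).
Proof. exact: (big_morph F FD F0). Qed.

Lemma FN f : F (- f) = - F f.
Proof. by apply/eqP; rewrite -subr_eq0 opprK -FD addNr F0. Qed.

Lemma FMn f n : F (f *+ n) = F f *+ n.
Proof. by elim: n => [|n IH]; rewrite ?mulr0n ?F0 // !mulrS FD IH. Qed.

Lemma Fsc k f : F (sc k * f) = sc k * F f.
Proof. by rewrite FM FC mulr0 addr0. Qed.

Lemma iterFD n f g : iter n F (f + g) = iter n F f + iter n F g.
Proof. by elim: n => //= n ->; rewrite FD. Qed.

Lemma iterF0 n : iter n F 0 = 0.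
Proof. by elim: n => //= n ->; rewrite F0. Qed.

Lemma iterFsc n k f : iter n F (sc k * f) = sc k * iter n F f.
Proof. by elim: n => //= n ->; rewrite Fsc. Qed.

Lemma iterFsum n I r P (g : I -> B) :
  iter n F (\sum_(i <- r | P i) g i) = \sum_(i <- r | P i) iter n F (g i).
Proof. exact: (big_morph (iter n F) (iterFD n) (iterF0 n)). Qed.

Lemma iterFMn n f m : iter n F (f *+ m) = iter n F f *+ m.
Proof. by elim: n => //= n ->; rewrite FMn. Qed.

Lemma iterF_zero n m f : iter n F f = 0 -> (n <= m)%N -> iter m F f = 0.
Proof. by move=> h /subnK <-; rewrite iterD h iterF0. Qed.

Lemma iterFM n f g : iter n F (f * g) =
  \sum_(i < n.+1) (iter i F f * iter (n - i) F g) *+ 'C(n, i).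
Proof.
elim: n => [|n IH]; first by rewrite big_ord1 /= mulr1n.
rewrite [LHS]/= IH Fsum.
under eq_bigr do rewrite FMn FM mulrnDl.
rewrite big_split /=.
rewrite [in RHS]big_ord_recl.
rewrite bin0 mulr1n.
under [in RHS]eq_bigr => i _ do rewrite lift0 binS mulrnDr subSS.
rewrite [in RHS]big_split /= addrA.
congr (_ + _).
  rewrite big_ord_recl /= subn0 bin0 mulr1n.
  congr (_ + _).
  rewrite [in RHS]big_ord_recr /= bin_small // mulr0n addr0.
  apply: eq_bigr => i _.
  rewrite /bump /= !add0n add1n; congr (_ * _ *+ _).
  by rewrite -[in RHS]subSS [in RHS]subSn.
apply: eq_bigr => i _; rewrite mulrC /=.
by [].
Qed.




Definition evalF (P : {poly K}) f := \sum_(i < size P) sc P`_i * iter i F f.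

Lemma evalF_wide (P : {poly K}) n f : (size P <= n)%N ->
  evalF P f = \sum_(i < n) sc P`_i * iter i F f.
Proof.
move=> le; rewrite /evalF (big_ord_widen n (fun i => sc P`_i * iter i F f)) //.
rewrite big_mkcond /=; apply: eq_bigr => i _; case: ltnP => // le2.
by rewrite nth_default // rmorph0 mul0r.
Qed.

Lemma evalF0 f : evalF 0 f = 0.
Proof. by rewrite /evalF size_poly0 big_ord0. Qed.

Lemma evalFD (P Q : {poly K}) f : evalF (P + Q) f = evalF P f + evalF Q f.
Proof.
pose n := maxn (size P) (size Q).
rewrite !(evalF_wide _ n) ?leq_maxl ?leq_maxr ?size_polyD // -big_split /=.
by apply: eq_bigr => i _; rewrite coefD rmorphD mulrDl.
Qed.

Lemma evalFC k (Q : {poly K}) f : evalF (k%:P * Q) f = sc k * evalF Q f.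
Proof.
rewrite !(evalF_wide _ (size Q)) // ?mul_polyC ?size_scale_leq // big_distrr /=.
by apply: eq_bigr => i _; rewrite coefZ rmorphM mulrA.
Qed.

Lemma evalF1 f : evalF 1 f = f.
Proof. by rewrite /evalF size_poly1 big_ord1 coefC /= rmorph1 mul1r. Qed.

Lemma evalF_MX (P : {poly K}) g : evalF (P * 'X) g = evalF P (F g).
Proof.
rewrite (evalF_wide _ (size P).+1); last first.
  by apply: leq_trans (size_polyMleq _ _) _; rewrite size_polyX addn2.
rewrite big_ord_recl coefMX /= rmorph0 mul0r add0r /evalF.
by apply: eq_bigr => i _; rewrite coefMX /= add0n -iterS iterSr.
Qed.

Lemma F_evalF (P : {poly K}) g : F (evalF P g) = evalF P (F g).
Proof. by rewrite Fsum; apply: eq_bigr => i _; rewrite Fsc -iterSr. Qed.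

Lemma evalF_mul (P Q : {poly K}) f : evalF (P * Q) f = evalF P (evalF Q f).
Proof.
elim/poly_ind: P Q => [|P k IH] Q; first by rewrite mul0r !evalF0.
rewrite mulrDl evalFD -mulrA IH evalFC evalFD evalF_MX.
rewrite -[k%:P]mulr1 evalFC evalF1; congr (_ + _).
by rewrite mulrC evalF_MX F_evalF.
Qed.

Lemma evalF_id (P : {poly K}) N f : iter N F f = 0 ->
  (forall k, (k < N)%N -> P`_k = (k == 0%N)%:R) -> evalF P f = f.
Proof.
move=> hN hP; case: N hN hP => [/= -> _|N hN hP].
  by rewrite /evalF big1 // => i _; rewrite iterF0 mulr0.
rewrite (evalF_wide _ (maxn (size P) N).+1) ?leqW ?leq_maxl //.
rewrite big_ord_recl hP //= rmorph1 mul1r big1 ?addr0 // => i _.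
rewrite /bump /= add1n; case: (ltnP i.+1 N.+1) => [lt|ge].
  by rewrite hP // rmorph0 mul0r.
by rewrite -iterS (iterF_zero _ _ _ hN ge) mulr0.
Qed.


Hypothesis hK : [pchar K] =i pred0.

Lemma natK_neq0 n : (0 < n)%N -> n%:R != 0 :> K.
Proof.
move=> n0; rewrite natf_neq0_pchar; apply/pnatP => // p pr _.
by rewrite inE /= hK.
Qed.

Lemma factK_neq0 n : (n`!)%:R != 0 :> K.
Proof. exact/natK_neq0/fact_gt0. Qed.

Definition Pexp (s : K) N : {poly K} := \poly_(i < N) (s ^+ i / (i`!)%:R).

Lemma Pexp_coef s N k : (k < N)%N -> (Pexp s N)`_k = s ^+ k / (k`!)%:R.
Proof. by move=> lt; rewrite coef_poly lt. Qed.

Lemma binK_id j k : (j <= k)%N ->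
  (j`!)%:R^-1 * ((k - j)`!)%:R^-1 = ('C(k, j))%:R / (k`!)%:R :> K.
Proof.
move=> le.
have hf : (k`!)%:R = ('C(k, j))%:R * ((j`!)%:R * ((k - j)`!)%:R) :> K.
  by rewrite -!natrM bin_fact.
have hC : ('C(k, j))%:R != 0 :> K by apply: natK_neq0; rewrite bin_gt0.
have h1 := factK_neq0 j; have h2 := factK_neq0 (k - j).
by rewrite hf; field; rewrite h1 h2 hC.
Qed.

Lemma binK_s (s : K) j k : (j <= k)%N ->
  s ^+ j / (j`!)%:R * (s ^+ (k - j) / ((k - j)`!)%:R) =
  s ^+ k / (k`!)%:R * ('C(k, j))%:R.
Proof.
move=> le; rewrite -{3}(subnKC le) exprD mulrACA binK_id //; ring.
Qed.


Lemma PmPe N k : (k < N)%N ->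
  (Pexp (-1) N * Pexp 1 N)`_k = (k == 0%N)%:R.
Proof.
move=> lt; rewrite coefM.
have -> : \sum_(j < k.+1) (Pexp (-1) N)`_j * (Pexp 1 N)`_(k - j) =
   (\sum_(j < k.+1) (1 ^+ (k - j) * (-1) ^+ j) *+ 'C(k, j)) / (k`!)%:R.
  rewrite mulr_suml; apply: eq_bigr => j _.
  have ljk : (j <= k)%N by rewrite -ltnS.
  rewrite !Pexp_coef; [|lia|lia].
  rewrite expr1n !mul1r -[_ *+ 'C(k, j)]mulr_natr -!mulrA; congr (_ * _).
  by rewrite binK_id // mulrC.
rewrite -exprDn_comm; last exact: commr_sym (commr1 _).
rewrite subrr expr0n; case: k lt => [|k] lt /=; last by rewrite mul0r.
by rewrite fact0 invr1 mulr1.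
Qed.


Lemma evalF_expM s N N1 N2 f g : iter N1 F f = 0 -> iter N2 F g = 0 ->
  (N1 + N2 <= N)%N ->
  evalF (Pexp s N) (f * g) = evalF (Pexp s N) f * evalF (Pexp s N) g.
Proof.
move=> hf hg hN.
pose a := \poly_(i < N) (sc (s ^+ i / (i`!)%:R) * iter i F f) : {poly B}.
pose b := \poly_(i < N) (sc (s ^+ i / (i`!)%:R) * iter i F g) : {poly B}.
have hev : forall h, evalF (Pexp s N) h =
   (\poly_(i < N) (sc (s ^+ i / (i`!)%:R) * iter i F h) : {poly B}).[1].
  move=> h; rewrite (evalF_wide _ N) ?size_poly // (horner_coef_wide _ (size_poly _ _)).
  by apply: eq_bigr => i _; rewrite !coef_poly ltn_ord expr1n mulr1.
rewrite (hev f) (hev g) -hornerM (horner_coef_wide (n := N + N)); last first.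
  by apply: leq_trans (size_polyMleq _ _) _; rewrite (leq_trans (leq_pred _)) // leq_add // size_poly.
rewrite (evalF_wide _ N) ?size_poly // big_split_ord /=.
rewrite [X in _ = _ + X]big1 ?addr0; last first.
  move=> i _; rewrite coefM big1 ?mul0r // => j _; rewrite !coef_poly.
  case: (ltnP j N) => lj; last by rewrite mul0r.
  case: (ltnP (N + i - j) N) => lkj; last by rewrite mulr0.
  have [h1|h1] : (N1 <= j)%N \/ (N2 <= (N + i) - j)%N by lia.
    by rewrite (iterF_zero _ _ _ hf h1) mulr0 mul0r.
  by rewrite (iterF_zero _ _ _ hg h1) !mulr0.
apply: eq_bigr => i _; rewrite expr1n !mulr1 coef_poly /= ltn_ord.
rewrite coefM iterFM big_distrr /=; apply: eq_bigr => j _.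
have ljk : (j <= i)%N by rewrite -ltnS.
have iN := ltn_ord i.
rewrite !coef_poly; have -> : (j < N)%N by lia.
have -> : (i - j < N)%N by lia.
rewrite -[_ *+ 'C(i, j)]mulr_natr (_ : ('C(i, j))%:R = sc ('C(i, j))%:R) ?rmorph_nat //.
set x := iter j F f; set y := iter (i - j) F g.
rewrite (_ : sc (s ^+ j / j`!%:R) * x * (sc (s ^+ (i - j) / (i - j)`!%:R) * y)
  = sc (s ^+ j / j`!%:R * (s ^+ (i - j) / (i - j)`!%:R)) * (x * y)); last first.
  by rewrite rmorphM; ring.
by rewrite binK_s // rmorphM; ring.
Qed.


Lemma LN_add f g n m : iter n F f = 0 -> iter m F g = 0 -> iter (n + m) F (f + g) = 0.
Proof.
move=> hf hg; rewrite iterFD (iterF_zero _ _ _ hf (leq_addr _ _)).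
by rewrite (iterF_zero _ _ _ hg (leq_addl _ _)) addr0.
Qed.

Lemma LN_sum I (r : seq I) (g : I -> B) :
  (forall i, exists n, iter n F (g i) = 0) ->
  exists n, iter n F (\sum_(i <- r) g i) = 0.
Proof.
move=> h; elim: r => [|i r [n IH]]; first by exists 0%N; rewrite big_nil.
have [m hm] := h i; exists (m + n)%N; rewrite big_cons; exact: LN_add.
Qed.

End LND.

Section Units.
Variable R : comNzRingType.
Hypothesis reduced : forall (x : R) n, x ^+ n = 0 -> x = 0.

Lemma unit_poly_const (p q : {poly R}) : p * q = 1 -> (size p <= 1)%N.
Proof.
move=> pq; apply/negPn/negP; rewrite -ltnNge => sp.
set a := lead_coef p.
have a0 : a != 0 by rewrite lead_coef_eq0 -size_poly_eq0; lia.
set q' := a%:P * q.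
have pq' : p * q' = a%:P by rewrite /q' mulrCA pq mulr1.
have q'0 : q' = 0.
  apply/eqP/negPn/negP => nq.
  have sq : (0 < size q')%N by rewrite size_poly_gt0.
  have := mul_lead_coef p q'; rewrite pq' coefC.
  have -> : ((size p + size q').-2 == 0%N) = false by apply/negbTE; lia.
  have -> : lead_coef q' = a * q`_(size q').-1 by rewrite lead_coefE /q' coefCM.
  move=> h; have h2 : (a * q`_(size q').-1) ^+ 2 = 0.
    have -> : (a * q`_(size q').-1) ^+ 2 = lead_coef p * (a * q`_(size q').-1) * q`_(size q').-1.
      by rewrite /a; ring.
    by rewrite h mul0r.
  move: nq; rewrite -lead_coef_eq0 lead_coefE /q' coefCM.
  by rewrite (reduced _ _ h2) eqxx.
by move: pq'; rewrite q'0 mulr0 => /esym/eqP; rewrite polyC_eq0 (negbTE a0).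
Qed.

End Units.

Section Vander.
Variables (K : fieldType) (B : comNzRingType) (sc : {rmorphism K -> B}).
Hypothesis hK : [pchar K] =i pred0.
Variable J : B -> Prop.
Hypothesis J0 : J 0.
Hypothesis JD : forall x y, J x -> J y -> J (x + y).
Hypothesis JS : forall k x, J x -> J (sc k * x).

Lemma Jsum I (r : seq I) (g : I -> B) : (forall i, J (g i)) -> J (\sum_(i <- r) g i).
Proof.
move=> h; elim: r => [|i r IH]; first by rewrite big_nil.
by rewrite big_cons; apply: JD.
Qed.

Lemma two_neq (i n : nat) : (i < n)%N -> (2 : K) ^+ i - 2 ^+ n != 0.
Proof.
move=> lt; rewrite -!natrX -opprB -natrB; last by rewrite leq_exp2l // ltnW.
rewrite oppr_eq0; apply: (natK_neq0 _ hK); rewrite subn_gt0 ltn_exp2l //.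
Qed.

Lemma vander n (a : nat -> B) :
  (forall s : K, J (\sum_(i < n) sc (s ^+ i) * a i)) -> forall i, (i < n)%N -> J (a i).
Proof.
elim: n a => [|n IH] a h i hi; first by [].
have hb : forall j, (j < n)%N -> J (sc (2 ^+ j - 2 ^+ n) * a j).
  apply: IH => s.
  have := JD _ _ (h (2 * s)) (JS (- (2 ^+ n)) _ (h s)).
  rewrite big_ord_recr /= [X in J (_ + (_ * X))]big_ord_recr /=.
  rewrite mulrDr !mulrA -rmorphM addrACA.
  rewrite (_ : sc ((2 * s) ^+ n) * a n + sc (- 2 ^+ n * s ^+ n) * a n = 0); last first.
    by rewrite -mulrDl -rmorphD exprMn mulNr addrN rmorph0 mul0r.
  rewrite addr0 big_distrr -big_split /=.
  congr J; apply: eq_bigr => j _; rewrite !mulrA -!rmorphM -mulrDl -rmorphD.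
  by congr (sc _ * _); rewrite exprMn mulNr; ring.
have ha : forall j, (j < n)%N -> J (a j).
  move=> j lj; have := JS ((2 ^+ j - 2 ^+ n)^-1) _ (hb j lj).
  by rewrite mulrA -rmorphM mulVf ?two_neq // rmorph1 mul1r.
have [lt|ge] := ltnP i n; first exact: ha.
have -> : i = n by lia.
have := JD _ _ (h 1) (Jsum _ (index_enum 'I_n) (fun j : 'I_n => sc (-1) * a j)
   (fun j => JS (-1) _ (ha j (ltn_ord j)))).
rewrite big_ord_recr /= expr1n rmorph1 mul1r.
under [X in J (_ + X)]eq_bigr do rewrite rmorphN1 mulN1r.
under eq_bigr do rewrite expr1n rmorph1 mul1r.
by rewrite sumrN addrAC subrr add0r.
Qed.
End Vander.

Lemma classic_min (P : nat -> Prop) : (exists n, P n) ->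
  exists n, P n /\ forall m, (m < n)%N -> ~ P m.
Proof.
move=> [n Pn]; elim: n {-2}n (leqnn n) Pn => [|N IH] n hn Pn.
  by exists n; split => // m; lia.
case: (Classical_Prop.classic (exists m, (m < n)%N /\ P m)) => [[m [lt Pm]]|nex].
  by apply: (IH m) => //; lia.
by exists n; split => // m lt Pm; apply: nex; exists m.
Qed.

Section Core.
Variables (K : fieldType) (R : comNzRingType) (phi : {rmorphism K -> R}).
Hypothesis hK : [pchar K] =i pred0.
Hypothesis reduced : forall (x : R) n, x ^+ n = 0 -> x = 0.
Hypothesis rigid : forall e : R -> R,
  (forall a b, e (a + b) = e a + e b) ->
  (forall a b, e (a * b) = a * e b + b * e a) ->
  (forall k, e (phi k) = 0) ->
  (forall a, exists n, iter n e a = 0) -> forall a, e a = 0.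
Hypothesis fg : exists s : seq R, forall r, gen_subalg phi (fun g => g \in s) r.
Variable E : {poly R} -> {poly R}.
Hypothesis ED : forall f g, E (f + g) = E f + E g.
Hypothesis EM : forall f g, E (f * g) = f * E g + g * E f.
Hypothesis EC : forall k, E (phi k)%:P = 0.
Hypothesis ELN : forall f, exists n, iter n E f = 0.

Let E0 : E 0 = 0 := F0 _ _ ED.
Let EN f : E (- f) = - E f := FN _ _ ED f.

Lemma size_CM (a : R) (q : {poly R}) : (size (a%:P * q)%R <= size q)%N.
Proof. by rewrite mul_polyC size_scale_leq. Qed.

Lemma size_Mn_le (p : {poly R}) n : (size (p *+ n) <= size p)%N.
Proof. by apply/leq_sizeP => j hj; rewrite coefMn nth_default // mul0rn. Qed.

Lemma E_bound : exists M, forall r, (size (E r%:P) <= M)%N.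
Proof.
have [s hs] := fg.
exists (\max_(g <- s) size (E g%:P))%N => r.
elim: (hs r) => {r} [k|g gs|f g _ IHf _ IHg|f g _ IHf _ IHg].
- by rewrite EC size_poly0.
- exact: leq_bigmax_seq.
- rewrite polyCD ED; apply: leq_trans (size_polyD _ _) _; by rewrite geq_max IHf IHg.
- rewrite polyCM EM; apply: leq_trans (size_polyD _ _) _.
  by rewrite geq_max (leq_trans (size_CM _ _)) ?(leq_trans (size_CM _ _)).
Qed.

Lemma EXn m : E ('X^(m.+1)) = (E 'X * 'X^m) *+ m.+1.
Proof.
elim: m => [|m IH]; first by rewrite expr1 expr0 mulr1.
rewrite exprSr EM IH [RHS]mulrS; congr (_ + _); first exact: mulrC.
by rewrite mulrnAr exprS mulrCA.
Qed.

Section Top.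
Variable d : nat.
Hypothesis Bd1 : forall r, (size (E r%:P) <= d.+1)%N.
Hypothesis Bd2 : (size (E 'X) <= d.+2)%N.

Definition e r := (E r%:P)`_d.
Definition c := (E 'X)`_d.+1.

Lemma top m (h : {poly R}) : (size h <= m.+1)%N ->
  (size (E h) <= (m + d).+1)%N /\ (E h)`_(m + d) = e h`_m + (m%:R * c) * h`_m.
Proof.
elim: m h => [|m IH] h sh.
  rewrite [h]size1_polyC // coefC /= mul0r mul0r addr0; split => //.
set b := h`_m.+1.
have hh : h = b%:P * 'X^(m.+1) + (h - b%:P * 'X^(m.+1)) by rewrite addrC subrK.
have sh' : (size (h - b%:P * 'X^(m.+1))%R <= m.+1)%N.
  apply/leq_sizeP => j hj; rewrite coefB coefCM coefXn.
  case: (ltngtP j m.+1) => [|hj2|->]; first by lia.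
    by rewrite mulr0 subr0; apply: (leq_sizeP _ _ sh).
  by rewrite mulr1 subrr.
have [IH1 IH2] := IH _ sh'.
rewrite hh ED EM EXn; split.
  apply: leq_trans (size_polyD _ _) _; rewrite geq_max; apply/andP; split.
    apply: leq_trans (size_polyD _ _) _; rewrite geq_max; apply/andP; split.
      apply: leq_trans (size_CM _ _) _; apply: leq_trans (size_Mn_le _ _) _.
      apply: leq_trans (size_polyMleq _ _) _; rewrite size_polyXn; lia.
    rewrite mulrC; apply: leq_trans (size_polyMleq _ _) _; rewrite size_polyXn.
    by have := Bd1 b; lia.
  by apply: leq_trans IH1 _; lia.
rewrite !coefD (leq_sizeP _ _ IH1) ?addr0; last by lia.
rewrite coefCM coefMn coefMXn [in X in _ + X]mulrC coefMXn.
have -> : (m.+1 + d < m)%N = false by lia.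
have -> : (m.+1 + d < m.+1)%N = false by lia.
have -> : (m.+1 + d - m = d.+1)%N by lia.
have -> : (m.+1 + d - m.+1 = d)%N by lia.
rewrite /e /c -[_ *+ m.+1]mulr_natl; ring.
Qed.


Lemma e0 : e 0 = 0.
Proof. by rewrite /e E0 coef0. Qed.
Lemma eD a b : e (a + b) = e a + e b.
Proof. by rewrite /e polyCD ED coefD. Qed.
Lemma eM a b : e (a * b) = a * e b + b * e a.
Proof. by rewrite /e polyCM EM coefD !coefCM. Qed.
Lemma eC k : e (phi k) = 0.
Proof. by rewrite /e EC coef0. Qed.
Lemma e1 : e 1 = 0.
Proof. by rewrite -(rmorph1 phi) eC. Qed.

Fixpoint ch (k : nat) (b : R) (n : nat) : R :=
  if n is n'.+1 then e (ch k b n') + ((k + n' * d)%:R * c) * ch k b n' else b.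

Lemma iter_top k b n :
  (size (iter n E (b%:P * 'X^k)%R) <= (k + n * d).+1)%N /\
  (iter n E (b%:P * 'X^k))`_(k + n * d) = ch k b n.
Proof.
elim: n => [|n [IH1 IH2]] /=.
  rewrite mul0n addn0 coefCM coefXn eqxx mulr1; split => //.
  by apply: leq_trans (size_CM _ _) _; rewrite size_polyXn.
have [T1 T2] := top _ _ IH1.
have -> : (k + n.+1 * d = k + n * d + d)%N by rewrite mulSn; lia.
by split => //; rewrite T2 IH2.
Qed.

Lemma ch_zero k b n m : ch k b n = 0 -> (n <= m)%N -> ch k b m = 0.
Proof.
move=> h /subnK <-; elim: (m - n)%N => [|j IH]; first by rewrite add0n.
by rewrite addSn /= IH e0 mulr0 addr0.
Qed.

Lemma ch_LN k b : exists n, ch k b n = 0.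
Proof.
have [n hn] := ELN (b%:P * 'X^k); exists n.
by have [_ <-] := iter_top k b n; rewrite hn coef0.
Qed.

Lemma ch0_iter b n : c = 0 \/ d = 0 -> ch 0 b n = iter n e b.
Proof.
move=> h; elim: n => //= n ->.
by case: h => ->; rewrite ?mulr0 ?muln0 ?mul0r ?addr0.
Qed.

Lemma e_zero : c = 0 \/ d = 0 -> forall a, e a = 0.
Proof.
move=> h; apply: rigid; [exact: eD|exact: eM|exact: eC|] => a.
by have [n hn] := ch_LN 0 a; exists n; rewrite -ch0_iter.
Qed.

Lemma c_zero_d0 : d = 0%N -> c = 0.
Proof.
move=> d0; have ez := e_zero (or_intror d0).
have hch : forall n, ch 1 1 n = c ^+ n.
  by elim=> //= n ->; rewrite ez d0 muln0 addn0 add0r mul1r exprS.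
by have [n hn] := ch_LN 1 1; apply: (reduced _ n); rewrite -hch.
Qed.

(* the top homogeneous component *)
Definition Ed (f : {poly R}) : {poly R} :=
  'X^d * (map_poly e f + c%:P * ('X * f^`())).

Lemma mapeD f g : map_poly e (f + g) = map_poly e f + map_poly e g.
Proof. by apply/polyP => i; rewrite coefD !coef_map_id0 ?e0 // coefD eD. Qed.

Lemma mapeM f g : map_poly e (f * g) = f * map_poly e g + g * map_poly e f.
Proof.
apply/polyP => i; rewrite coefD coef_map_id0 ?e0 // coefM coefM coefMr.
rewrite (big_morph e eD e0) -big_split /=; apply: eq_bigr => j _.
by rewrite eM !coef_map_id0 ?e0.
Qed.

Lemma EdD f g : Ed (f + g) = Ed f + Ed g.
Proof. by rewrite /Ed mapeD derivD; ring. Qed.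

Lemma EdM f g : Ed (f * g) = f * Ed g + g * Ed f.
Proof. by rewrite /Ed mapeM derivM; ring. Qed.

Lemma EdC k : Ed (phi k)%:P = 0.
Proof.
rewrite /Ed; have -> : map_poly e (phi k)%:P = 0.
  apply/polyP => i; rewrite coef_map_id0 ?e0 // coefC coef0.
  by case: (i == 0)%N; rewrite ?eC ?e0.
by rewrite derivC !mulr0 addr0 mulr0.
Qed.

Lemma Ed_mono k b :
  Ed (b%:P * 'X^k) = (e b + (k%:R * c) * b)%:P * 'X^(k + d).
Proof.
have hm : map_poly e (b%:P * 'X^k) = (e b)%:P * 'X^k.
  apply/polyP => i; rewrite coef_map_id0 ?e0 // !coefCM coefXn.
  by case: (i == k); rewrite ?mulr1 ?mulr0 ?e0.
have hd : 'X * (b%:P * 'X^k)^`() = (b%:P * 'X^k) *+ k.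
  rewrite derivM derivC mul0r add0r derivXn.
  case: (k) => [|k']; first by rewrite !mulr0n !mulr0.
  by rewrite /= !mulrnAr mulrCA -exprS.
rewrite /Ed hm hd exprD polyCD polyCM polyCM -mulr_natl.
rewrite (_ : (k%:R : R)%:P = k%:R); last by rewrite polyC_natr.
ring.
Qed.

Lemma iter_Ed k b n : iter n Ed (b%:P * 'X^k) = (ch k b n)%:P * 'X^(k + n * d).
Proof.
elim: n => [|n IH] /=; first by rewrite mul0n addn0.
by rewrite IH Ed_mono; congr (_ * 'X^_); rewrite mulSn; lia.
Qed.

Lemma Ed_LN f : exists n, iter n Ed f = 0.
Proof.
rewrite -[f]coefK poly_def; apply: LN_sum; first exact: EdD.
move=> i; rewrite -mul_polyC; have [n hn] := ch_LN i f`_i.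
by exists n; rewrite iter_Ed hn mul0r.
Qed.


Lemma mulX_inj (p q : {poly R}) : 'X * p = 'X * q -> p = q.
Proof.
move=> h; apply/polyP => i.
by have := congr1 (fun r : {poly R} => r`_i.+1) h; rewrite /= !coefXM.
Qed.

Let scp : {rmorphism K -> {poly R}} := polyC \o phi.
Let ev s N f := evalF K {poly R} scp Ed (Pexp K s N) f.

Lemma c_zero_pos : (0 < d)%N -> c = 0.
Proof.
move=> d0.
have [N0 hN0] := ch_LN 1 1.
pose M := N0.+2.
have hchM : forall n, (M <= n)%N -> ch 1 1 n = 0.
  by move=> n hn; apply: (ch_zero _ _ N0) => //; rewrite /M in hn; lia.
pose U (s : K) := \sum_(n < M) (phi (s ^+ n / (n`!)%:R) * ch 1 1 n)%:P * 'X^(n * d).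
have hX : forall s N, (M <= N)%N -> ev s N 'X = 'X * U s.
  move=> s N hN; rewrite /ev (evalF_wide _ _ _ _ _ N) ?size_poly //.
  rewrite /U big_distrr /= (big_ord_widen N (fun n => 'X * ((phi (s ^+ n / (n`!)%:R) * ch 1 1 n)%:P * 'X^(n * d))) hN).
  rewrite [RHS]big_mkcond /=; apply: eq_bigr => i _.
  have h := iter_Ed 1 1 i; rewrite polyC1 mul1r expr1 in h; rewrite h.
  rewrite Pexp_coef ?ltn_ord //.
  case: ltnP => hi.
    by rewrite /= polyCM exprD expr1; ring.
  by rewrite hchM // !mul0r mulr0.
have [NX hNX] := Ed_LN 'X.
have [N1 hN1] := Ed_LN (U 1).
pose N := (M + NX + N1)%N.
have hba : ev (-1) N (ev 1 N 'X) = 'X.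
  rewrite /ev -(evalF_mul _ _ scp _ EdD EdM EdC).
  apply: (evalF_id _ _ _ _ EdD _ N).
    by apply: (iterF_zero _ _ EdD _ _ _ hNX); rewrite /N; lia.
  by move=> k hk; apply: PmPe.
have hb : ev (-1) N ('X * U 1) = ev (-1) N 'X * ev (-1) N (U 1).
  by apply: (evalF_expM _ _ _ _ EdD EdM hK _ _ NX N1) => //; rewrite /N; lia.
rewrite hX ?hb ?hX in hba; try by rewrite /N; lia.
have hu : U (-1) * ev (-1) N (U 1) = 1.
  by apply: mulX_inj; rewrite mulr1 mulrA.
have sz := unit_poly_const _ reduced _ _ hu.
have : (U (-1))`_d = 0 by rewrite nth_default //; apply: leq_trans sz _.
have M1 : (1 < M)%N by [].
rewrite /U coef_sum (bigD1 (Ordinal M1)) //= big1 ?addr0; last first.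
  move=> i hi; rewrite coefCM coefXn.
  have -> : (d == i * d)%N = false.
    apply/negbTE; apply: contra hi => /eqP hd.
    apply/eqP/val_inj => /=; apply/eqP.
    by rewrite -(eqn_pmul2r d0) mul1n -hd.
  by rewrite mulr0.
rewrite coefCM coefXn mul1n eqxx mulr1 e1 add0r mul1r mulr1 expr1.
by rewrite (_ : 1`!%:R = 1 :> K) ?divr1 // rmorphN1 mulN1r => /eqP; rewrite oppr_eq0 => /eqP.
Qed.

End Top.

Lemma size_drop (p : {poly R}) n : (size p <= n.+1)%N -> p`_n = 0 -> (size p <= n)%N.
Proof.
move=> s h; apply/leq_sizeP => j; rewrite leq_eqVlt => /orP [/eqP <- // | lt].
exact: (leq_sizeP _ _ s).
Qed.

Theorem core : forall r, E r%:P = 0.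
Proof.
case: (classic (forall r, E r%:P = 0)) => // hn; exfalso.
have [r0 hr0] := not_all_ex_not _ _ hn.
have [M hM] := E_bound.
pose P d := (forall r, (size (E r%:P) <= d.+1)%N) /\ (size (E 'X) <= d.+2)%N.
have [d [[B1 B2] hmin]] : exists d, P d /\ forall m, (m < d)%N -> ~ P m.
  apply: classic_min; exists (M + size (E 'X))%N; split.
    by move=> r; have := hM r; lia.
  by lia.
have c0 : c d = 0.
  case: d B1 B2 hmin => [|d'] B1 B2 hmin; first exact: (c_zero_d0 _ B1 B2).
  exact: (c_zero_pos _ B1 B2).
have ez := e_zero _ B1 B2 (or_introl c0).
case: d B1 B2 hmin c0 ez => [|d'] B1 B2 hmin c0 ez.
  apply: hr0; have := B1 r0 => /size1_polyC ->.
  by have := ez r0; rewrite /e => ->.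
apply: (hmin d') => //; split.
  by move=> r; apply: size_drop; [exact: B1|exact: ez].
by apply: size_drop.
Qed.

End Core.

Section Main.
Local Open Scope quotient_scope.
Variables (K : fieldType) (A : comNzRingType) (iota : {rmorphism K -> A}).
Hypothesis hK : [pchar K] =i pred0.
Hypothesis hfg : fin_gen_alg iota.
Variable I : A -> Prop.
Hypothesis hI : radical_ideal I.
Hypothesis hne : ~ I 1.
Hypothesis hrig : rigid_quot iota I.
Hypothesis hinv : SAut_invariant (polyC_emb iota) (coef_ideal I).

Lemma I0 : I 0. Proof. by case: hI. Qed.
Lemma IA a b : I a -> I b -> I (a + b).
Proof. by case: hI => _ h _ _; exact: h. Qed.
Lemma IM a b : I b -> I (a * b).
Proof. by case: hI => _ _ h _; exact: h. Qed.
Lemma Irad a n : I (a ^+ n) -> I a.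
Proof. by case: hI => _ _ _ h; exact: h. Qed.

Definition Ib : {pred A} := fun a => asbool (I a).
Lemma Ib_closed : idealr_closed Ib.
Proof.
split.
- by apply/asboolP; exact: I0.
- by apply/negP => /asboolP.
- by move=> a u v /asboolP hu /asboolP hv; apply/asboolP; exact: IA (IM _ _ hu) hv.
Qed.
HB.instance Definition _ := isIdealr.Build A Ib Ib_closed.
Definition RQ := {ideal_quot Ib}.
Definition pi : {rmorphism A -> RQ} := \pi_RQ.

Lemma piI a : pi a = 0 <-> I a.
Proof.
have h : (pi a == 0) = asbool (I a).
  rewrite /pi -[0 : RQ](rmorph0 (\pi_RQ : {rmorphism A -> RQ})).
  by rewrite -(@Quotient.idealrBE _ Ib) subr0.
split; first by move/eqP; rewrite h => /asboolP.
by move=> ha; apply/eqP; rewrite h; apply/asboolP.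
Qed.

Lemma piK (x : RQ) : pi (repr x) = x.
Proof. exact: reprK. Qed.

Definition phi : {rmorphism K -> RQ} := pi \o iota.

Lemma redQ (x : RQ) n : x ^+ n = 0 -> x = 0.
Proof. by rewrite -(piK x) -rmorphXn => /piI /Irad /piI. Qed.

Lemma rigidQ (e : RQ -> RQ) :
  (forall a b, e (a + b) = e a + e b) ->
  (forall a b, e (a * b) = a * e b + b * e a) ->
  (forall k, e (phi k) = 0) ->
  (forall a, exists n, iter n e a = 0) -> forall a, e a = 0.
Proof.
move=> eD eM eC eLN.
have e0 : e 0 = 0 by apply: (addrI (e 0)); rewrite -eD !addr0.
pose D a := repr (e (pi a)).
have hD : forall a, pi (D a) = e (pi a) by move=> a; exact: piK.
have LNmod : is_LND_mod iota I D.
  split.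
  - by move=> a /piI ha; apply/piI; rewrite hD ha e0.
  - by move=> a b; apply/piI; rewrite rmorphB rmorphD !hD rmorphD eD subrr.
  - by move=> a b; apply/piI; rewrite rmorphB rmorphD !rmorphM !hD rmorphM eM subrr.
  - by move=> k; apply/piI; rewrite hD; exact: (eC k).
  - move=> a; have [n hn] := eLN (pi a); exists n; apply/piI.
    have hit : forall m x, pi (iter m D x) = iter m e (pi x).
      by elim => [|m IH] x; rewrite ?iterS ?hD ?IH.
    by rewrite hit hn.
move=> x; rewrite -(piK x).
case: (classic (I (D (repr x)))) => h.
  by move/piI: h; rewrite hD.
by exfalso; apply: hrig; exists D; split => //; exists (repr x).
Qed.

Lemma fgQ : exists s : seq RQ, forall r, gen_subalg phi (fun g => g \in s) r.
Proof.
have [s hs] := hfg; exists (map pi s) => r; rewrite -(piK r).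
elim: (hs (repr r)) => {r} [k|g gs|f g _ IHf _ IHg|f g _ IHf _ IHg].
- exact: (gs_const phi _ k).
- by apply: gs_gen; apply: map_f.
- by rewrite rmorphD; apply: gs_add.
- by rewrite rmorphM; apply: gs_mul.
Qed.

Let sc : {rmorphism K -> {poly A}} := polyC \o iota.

Lemma DJ D : is_LND (polyC_emb iota) D ->
  forall f, coef_ideal I f -> coef_ideal I (D f).
Proof.
move=> hD; have [[DD DM DC] DLN] := hD; move=> f hf.
have [n hn] := DLN f.
have hn2 : iter n.+2 D f = 0 by apply: (iterF_zero _ _ DD _ _ _ hn); lia.
have J0 : coef_ideal I 0 by move=> i; rewrite coef0; exact: I0.
have JD : forall x y, coef_ideal I x -> coef_ideal I y -> coef_ideal I (x + y).
  by move=> x y hx hy i; rewrite coefD; apply: IA.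
have JS : forall k x, coef_ideal I x -> coef_ideal I (sc k * x).
  by move=> k x hx i; rewrite /= coefCM; apply: IM.
suff hs : forall s : K, coef_ideal I
    (\sum_(i < n.+2) sc (s ^+ i) * (sc ((i`!)%:R^-1) * iter i D f)).
  have := vander K _ sc hK (coef_ideal I) J0 JD JS n.+2 (fun i => sc ((i`!)%:R^-1) * iter i D f) hs 1%N isT.
  by rewrite /= invr1 rmorph1 mul1r.
move=> s; have := hinv D hD s f hf n.+2 hn2; rewrite /exp_sum.
congr coef_ideal; apply: eq_bigr => i _.
by rewrite mulrA -rmorphM.
Qed.

Definition lift (p : {poly RQ}) : {poly A} := \poly_(i < size p) repr p`_i.

Lemma Pi_lift p : map_poly pi (lift p) = p.
Proof.
apply/polyP => i; rewrite coef_map coef_poly.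
by case: ltnP => h /=; rewrite ?piK // (rmorph0 pi) nth_default.
Qed.

Lemma PiJ f : map_poly pi f = 0 -> coef_ideal I f.
Proof.
by move=> h i; apply/piI; have := congr1 (fun p : {poly RQ} => p`_i) h; rewrite /= coef_map coef0.
Qed.

Lemma JPi f : coef_ideal I f -> map_poly pi f = 0.
Proof. by move=> h; apply/polyP => i; rewrite coef_map coef0; apply/piI. Qed.

Section Induced.
Variable D : {poly A} -> {poly A}.
Hypothesis hD : is_LND (polyC_emb iota) D.
Hypothesis hs : has_slice D.

Let DD : forall f g, D (f + g) = D f + D g. Proof. by case: hD => [[]]. Qed.
Let DM : forall f g, D (f * g) = f * D g + g * D f. Proof. by case: hD => [[]]. Qed.
Let DC : forall k, D (polyC_emb iota k) = 0. Proof. by case: hD => [[]]. Qed.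
Let DLN : forall f, exists n, iter n D f = 0. Proof. by case: hD. Qed.

Definition EQ (p : {poly RQ}) := map_poly pi (D (lift p)).

Lemma E_Pi f : EQ (map_poly pi f) = map_poly pi (D f).
Proof.
rewrite /EQ; apply/eqP; rewrite -subr_eq0 -rmorphB -(FN _ _ DD) -DD; apply/eqP.
apply: JPi; apply: (DJ _ hD); apply: PiJ.
by rewrite (raddfB (map_poly pi)) /= Pi_lift subrr.
Qed.

Lemma EQD p q : EQ (p + q) = EQ p + EQ q.
Proof.
rewrite -(Pi_lift p) -(Pi_lift q) -(rmorphD (map_poly pi)) !E_Pi DD.
by rewrite (rmorphD (map_poly pi)).
Qed.

Lemma EQM p q : EQ (p * q) = p * EQ q + q * EQ p.
Proof.
rewrite -(Pi_lift p) -(Pi_lift q) -(rmorphM (map_poly pi)) !E_Pi DM.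
by rewrite (rmorphD (map_poly pi)) !(rmorphM (map_poly pi)).
Qed.

Lemma EQC k : EQ (phi k)%:P = 0.
Proof.
have -> : (phi k)%:P = map_poly pi (polyC_emb iota k) by rewrite /polyC_emb map_polyC.
by rewrite E_Pi DC rmorph0.
Qed.

Lemma EQLN p : exists n, iter n EQ p = 0.
Proof.
have [n hn] := DLN (lift p); exists n.
have -> : iter n EQ p = map_poly pi (iter n D (lift p)).
  by elim: n {hn} => [|n IH] /=; rewrite ?Pi_lift // IH E_Pi.
by rewrite hn rmorph0.
Qed.

Lemma EQ_const r : EQ r%:P = 0.
Proof. exact: (core _ _ phi hK redQ rigidQ fgQ EQ EQD EQM EQC EQLN). Qed.

Lemma EQ_deriv p : EQ p = p^`() * EQ 'X.
Proof.
elim/poly_ind: p => [|p k IH]; first by rewrite deriv0 mul0r (F0 _ _ EQD).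
rewrite EQD EQM EQ_const IH derivMXaddC; ring.
Qed.

Lemma ker_const g : D g = 0 -> (size (map_poly pi g) <= 1)%N.
Proof.
move=> hg.
have hE : EQ (map_poly pi g) = 0 by rewrite E_Pi hg rmorph0.
have [s hsl] := hs.
have h1 : (map_poly pi s)^`() * EQ 'X = 1 by rewrite -EQ_deriv E_Pi hsl rmorph1.
rewrite EQ_deriv in hE.
have hd : (map_poly pi g)^`() = 0.
  by rewrite -[LHS]mulr1 -h1 [_ * EQ 'X]mulrC mulrA hE mul0r.
apply/leq_sizeP => j; case: j => [//|i] _.
have := congr1 (fun p : {poly RQ} => p`_i) hd; rewrite /= coef_deriv coef0.
set x := (map_poly pi g)`_i.+1 => hx.
have hu : phi ((i.+1)%:R^-1) * phi (i.+1)%:R = 1.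
  by rewrite -rmorphM mulVf ?rmorph1 // (natK_neq0 _ hK).
by rewrite -[x]mul1r -hu -mulrA rmorph_nat mulr_natl hx mulr0.
Qed.

End Induced.

Theorem mainQ : ~ (forall f : {poly A}, HDstar (polyC_emb iota) f).
Proof.
move=> h.
have hP : forall f, HDstar (polyC_emb iota) f -> (size (map_poly pi f) <= 1)%N.
  move=> f; elim => {f} [k|g [D [hD hsl hg]]|f g _ IHf _ IHg|f g _ IHf _ IHg].
  - by rewrite /polyC_emb map_polyC size_polyC_leq1.
  - exact: (ker_const _ hD hsl _ hg).
  - by rewrite rmorphD; apply: leq_trans (size_polyD _ _) _; rewrite geq_max IHf IHg.
  - rewrite rmorphM; apply: leq_trans (size_polyMleq _ _) _; rewrite -subn1 leq_subLR; exact: (leq_add IHf IHg).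
by have := hP _ (h 'X); rewrite map_polyX size_polyX.
Qed.

End Main.

Theorem corollary5 (K : closedFieldType) (hK : [pchar K] =i pred0)
  (A : idomainType) (iota : {rmorphism K -> A})
  (hfg : fin_gen_alg iota)
  (I : A -> Prop) (hI : radical_ideal I) (hne : ~ I 1)
  (hrig : rigid_quot iota I)
  (hinv : SAut_invariant (polyC_emb iota) (coef_ideal I)) :
  ~ (forall f : {poly A}, HDstar (polyC_emb iota) f).
Proof.

exact: (mainQ _ _ iota hK hfg I hI hne hrig hinv).
Qed.
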